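(* In the 1-sided False Negative regime, the following Naive algorithm finds a realized spanning tree while performing $O(m\log n)$ queries in expectation: proceed in rounds, in each round querying every one of the $m$ edges of the moldgraph once, and stop as soon as the edges that have received a ``Yes'' answer contain a spanning tree (which is then output).
   Context: Problem (graph connectivity with noisy queries): a graph $G=(V,E)$, the moldgraph, with $n$ vertices and $m$ edges is given. An adversary selects an arbitrary connected spanning subgraph of $G$ to be realized. The algorithm may query an oracle on any edge $e$ (``Is $e$ realized?''), receiving ``Yes''/``No''; each query costs $1$; answers to distinct queries (including repeated queries of the same edge) are independent. Goal: output a spanning tree of $G$ all of whose edges are realized. In the 1-sided False Negative regime: for a non-realized edge the answer is always ``No''; for a realized edge the answer is ``No'' with a constant probability $p<1/2$ and ``Yes'' with probability $1-p$. *)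

(* Defs.v *)
From HB Require Import structures.
From mathcomp Require Import all_boot all_order all_algebra.
From mathcomp Require Import all_classical all_reals all_analysis.
Set Implicit Arguments. Unset Strict Implicit. Unset Printing Implicit Defensive.
Import Order.TTheory GRing.Theory Num.Theory.
Local Open Scope ring_scope.

Section Naive.
Variable V : finType.

Definition simple_graph (E : {set {set V}}) : bool :=
  [forall e in E, #|e| == 2]%N.

Definition adj (F : {set {set V}}) : rel V := fun x y => [set x; y] \in F.

Definition gconnected (F : {set {set V}}) : bool :=
  [forall x, forall y, connect (adj F) x y].

Definition spanning_tree (E T : {set {set V}}) : bool :=
  [&& T \subset E, gconnected T & [forall e in T, ~~ gconnected (T :\ e)]].

(* Outcomes of k rounds: omega i e is the answer (true = Yes) to the query on
   edge e in round i.  (Non-edges are formally included and always answer No;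
   they never influence anything.) *)
Definition outcome (k : nat) := {ffun 'I_k -> {ffun {set V} -> bool}}.

Variable R : realType.

Definition ans_prob (p : R) (Rz : {set {set V}}) (e : {set V}) (b : bool) : R :=
  if e \in Rz then (if b then 1 - p else p) else (if b then 0 else 1).

Definition outcome_prob (p : R) (Rz : {set {set V}}) k (om : outcome k) : R :=
  \prod_(i < k) \prod_(e : {set V}) ans_prob p Rz e (om i e).

Definition yes_edges (E : {set {set V}}) k (om : outcome k) (j : nat) :=
  [set e in E | [exists i : 'I_k, (i < j)%N && om i e]].

Definition stopped (E : {set {set V}}) k (om : outcome k) (j : nat) : bool :=
  [exists T : {set {set V}}, spanning_tree E T && (T \subset yes_edges E om j)].

Definition prob_stop_at (p : R) (E Rz : {set {set V}}) (k : nat) : R :=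
  \sum_(om : outcome k)
     outcome_prob p Rz om *
     (stopped E om k && [forall j : 'I_k, ~~ stopped E om j])%:R.

Definition expected_queries (p : R) (E Rz : {set {set V}}) : \bar R :=
  (\sum_(k <oo) (((#|E| * k)%:R * prob_stop_at p E Rz k)%:E))%E.

End Naive.

(* Main.v *)
Require Import Defs.
From HB Require Import structures.
From mathcomp Require Import all_boot all_order all_algebra.
From mathcomp Require Import all_classical all_reals all_analysis.
From mathcomp Require Import lra ring zify.
Import Order.TTheory GRing.Theory Num.Theory.
Local Open Scope ring_scope.
Set Implicit Arguments. Unset Strict Implicit. Unset Printing Implicit Defensive.

Section Prob.
Variables (V : finType) (R : realType) (p : R) (Rz : {set {set V}}).
Hypotheses (p0 : 0 <= p) (p1 : p <= 1).

Lemma ans_ge0 e b : 0 <= ans_prob p Rz e b.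
Proof. rewrite /ans_prob; case: ifP => _; case: b => /=; move: p0 p1; lra. Qed.

Lemma ans_sum e : \sum_b ans_prob p Rz e b = 1.
Proof. rewrite big_bool /ans_prob; case: ifP => _ /=; move: p0 p1; lra. Qed.

Lemma sum_ffun (H : {set V} -> bool -> R) :
  \sum_(w : {ffun {set V} -> bool}) \prod_e H e (w e) = \prod_e \sum_b H e b.
Proof. by rewrite bigA_distr_bigA. Qed.

Lemma sum_outcome k (G : 'I_k -> {ffun {set V} -> bool} -> R) :
  \sum_(om : outcome V k) \prod_i G i (om i) = \prod_i \sum_w G i w.
Proof. by rewrite bigA_distr_bigA. Qed.

Lemma prob_ge0 k (om : outcome V k) : 0 <= outcome_prob p Rz om.
Proof. by apply: prodr_ge0 => i _; apply: prodr_ge0 => e _; apply: ans_ge0. Qed.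

Lemma prob_sum k : \sum_(om : outcome V k) outcome_prob p Rz om = 1.
Proof.
rewrite /outcome_prob (sum_outcome (fun i w => \prod_e ans_prob p Rz e (w e))).
apply: big1 => i _.
by rewrite (sum_ffun (fun e b => ans_prob p Rz e b)); apply: big1 => e _; apply: ans_sum.
Qed.

Lemma prod_ind (I : finType) (P : pred I) :
  \prod_i ((P i)%:R : R) = ([forall i, P i])%:R.
Proof.
case: (boolP [forall i, P i]) => [/forallP H | /forallPn [i Hi]].
  by rewrite big1 // => i _; rewrite H.
by rewrite (bigD1 i) //= (negbTE Hi) mul0r.
Qed.

Lemma prob_none k e : e \in Rz ->
  \sum_(om : outcome V k) outcome_prob p Rz om * ([forall i, ~~ om i e])%:R
  = p ^+ k.
Proof.
move=> eR.
rewrite (eq_bigr (fun om : outcome V k => \prod_i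
   (\prod_e' (ans_prob p Rz e' (om i e') *
      (if e' == e then (~~ om i e')%:R else 1))))); last first.
  move=> om _; rewrite /outcome_prob -prod_ind -big_split /=.
  apply: eq_bigr => i _; rewrite big_split /=; congr (_ * _).
  rewrite (bigD1 e) //= eqxx big1 ?mulr1 // => e' /negbTE -> //.
rewrite (sum_outcome (fun i w => \prod_e' (ans_prob p Rz e' (w e') *
      (if e' == e then (~~ w e')%:R else 1)))) (eq_bigr (fun _ => p)) ?prodr_const ?card_ord // => i _.
rewrite (sum_ffun (fun e' b => ans_prob p Rz e' b *
      (if e' == e then (~~ b)%:R else 1))) (bigD1 e) //= big_bool eqxx.
rewrite [X in _ * X]big1.
  by rewrite /ans_prob eR /= mulr0 mulr1 add0r mulr1.
move=> e' /negbTE ->; rewrite (eq_bigr (fun b => ans_prob p Rz e' b)) ?ans_sum //.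
by move=> b _; rewrite mulr1.
Qed.

Lemma prob_pos_yes k (om : outcome V k) i e :
  0 < outcome_prob p Rz om -> om i e -> e \in Rz.
Proof.
move=> H Hy; apply/negPn/negP => eN; move: H.
rewrite /outcome_prob (bigD1 i) //= (bigD1 e) //= /ans_prob (negbTE eN) Hy.
by rewrite mul0r mul0r ltxx.
Qed.

Definition trunc k (om : outcome V k.+1) : outcome V k :=
  [ffun i => om (widen_ord (leqnSn k) i)].
Definition ext k (a : outcome V k) (w : {ffun {set V} -> bool}) : outcome V k.+1 :=
  [ffun i : 'I_k.+1 => if insub (val i) is Some j then a j else w].

Lemma trunc_ext k (a : outcome V k) w : trunc (ext a w) = a.
Proof.
apply/ffunP => j; rewrite !ffunE /=.
case: insubP => [u _ Hu | /negP []]; last exact: ltn_ord.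
by congr (a _); apply: val_inj.
Qed.

Lemma ext_last k (a : outcome V k) w : ext a w ord_max = w.
Proof. by rewrite ffunE; case: insubP => [u /= Hu|//]; rewrite ltnn in Hu. Qed.

Lemma ext_widen k (a : outcome V k) w i : ext a w (widen_ord (leqnSn k) i) = a i.
Proof. by have := congr1 (fun f : outcome V k => f i) (trunc_ext a w); rewrite ffunE. Qed.

Lemma ext_trunc k (om : outcome V k.+1) : ext (trunc om) (om ord_max) = om.
Proof.
apply/ffunP => i; rewrite !ffunE; case: insubP => [u Hu Hv | Hn].
  by rewrite ffunE; congr (om _); apply: val_inj => /=; rewrite Hv.
congr (om _); apply: val_inj => /=; apply/eqP.
by rewrite eqn_leq leqNgt Hn /= -ltnS ltn_ord.
Qed.

Lemma marginal k (g : outcome V k -> R) :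
  \sum_(om : outcome V k.+1) outcome_prob p Rz om * g (trunc om) =
  \sum_(a : outcome V k) outcome_prob p Rz a * g a.
Proof.
rewrite (reindex (fun x : outcome V k * {ffun {set V} -> bool} => ext x.1 x.2)) /=;
  last first.
  exists (fun om => (trunc om, om ord_max)) => [[a w] _ | om _] /=.
    by rewrite trunc_ext ext_last.
  by rewrite ext_trunc.
rewrite -(pair_bigA _ (fun a w => outcome_prob p Rz (ext a w) * g (trunc (ext a w)))) /=.
apply: eq_bigr => a _.
rewrite (eq_bigr (fun w : {ffun {set V} -> bool} => (outcome_prob p Rz a * g a) *
   \prod_e ans_prob p Rz e (w e))); last first.
  move=> w _; rewrite trunc_ext /outcome_prob big_ord_recr /= ext_last.
  rewrite (eq_bigr (fun i => \prod_e ans_prob p Rz e (a i e))); last first.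
    by move=> i _; rewrite ext_widen.
  by rewrite mulrAC.
rewrite -mulr_sumr (sum_ffun (fun e b => ans_prob p Rz e b)).
by rewrite big1 ?mulr1 // => e _; apply: ans_sum.
Qed.

Variable E : {set {set V}}.

Lemma yes_trunc k (om : outcome V k.+1) j : (j <= k)%N ->
  yes_edges E om j = yes_edges E (trunc om) j.
Proof.
move=> jk; apply/setP => e; rewrite !inE; congr andb.
apply/existsP/existsP => [[i /andP [ij Hi]] | [i /andP [ij Hi]]].
  have ik : (i < k)%N by apply: leq_trans jk.
  exists (Ordinal ik); rewrite ij ffunE /=.
  by have -> : widen_ord (leqnSn k) (Ordinal ik) = i by apply: val_inj.
by exists (widen_ord (leqnSn k) i); rewrite ij; rewrite ffunE in Hi.
Qed.

Lemma stopped_trunc k (om : outcome V k.+1) j : (j <= k)%N ->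
  stopped E om j = stopped E (trunc om) j.
Proof. by move=> jk; rewrite /stopped yes_trunc. Qed.

Lemma stopped_mono k (om : outcome V k) j j' : (j <= j')%N ->
  stopped E om j -> stopped E om j'.
Proof.
move=> jj /existsP [T /andP [HT Hs]]; apply/existsP; exists T; rewrite HT /=.
apply/fintype.subsetP => e /(fintype.subsetP Hs); rewrite !inE => /andP [-> /existsP [i /andP [ij Hi]]].
by apply/existsP; exists i; rewrite Hi (leq_trans ij jj).
Qed.

Lemma stop_ind k (om : outcome V k.+1) :
  ((stopped E om k.+1 && [forall j : 'I_k.+1, ~~ stopped E om j])%:R : R) =
  (~~ stopped E om k)%:R - (~~ stopped E om k.+1)%:R.
Proof.
have -> : [forall j : 'I_k.+1, ~~ stopped E om j] = ~~ stopped E om k.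
  apply/forallP/idP => [H | H j]; first exact: (H ord_max).
  by apply: contra H; apply: stopped_mono; rewrite -ltnS.
case Hk: (stopped E om k) => /=.
  by rewrite (stopped_mono (leqnSn k) Hk) /= subrr.
by case: (stopped E om k.+1) => /=; rewrite ?subrr ?subr0.
Qed.

Lemma exists_tree (F : {set {set V}}) : F \subset E -> gconnected F ->
  exists T, spanning_tree E T && (T \subset F).
Proof.
move=> FE HF.
have PF : (F \subset F) && gconnected F by rewrite subxx.
case: (@arg_minnP _ F (fun T : {set {set V}} => (T \subset F) && gconnected T) (fun T : {set {set V}} => #|T|) PF) => T /andP [TF HT] Hmin.
exists T; rewrite TF andbT /spanning_tree (fintype.subset_trans TF FE) HT /=.
apply/forallP => e; apply/implyP => eT; apply/negP => Hc.
have := Hmin (T :\ e); rewrite Hc andbT (fintype.subset_trans (subD1set T e) TF).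
by rewrite (cardsD1 e T) eT ltnn => /(_ isT).
Qed.

Definition NS k := \sum_(om : outcome V k) outcome_prob p Rz om * (~~ stopped E om k)%:R.

Lemma prob_stop_succ k : prob_stop_at p E Rz k.+1 = NS k - NS k.+1.
Proof.
rewrite /prob_stop_at (eq_bigr (fun om => outcome_prob p Rz om *
   ((~~ stopped E om k)%:R - (~~ stopped E om k.+1)%:R))); last first.
  by move=> om _; rewrite stop_ind.
rewrite (eq_bigr (fun om => outcome_prob p Rz om * (~~ stopped E om k)%:R -
   outcome_prob p Rz om * (~~ stopped E om k.+1)%:R)); last first.
  by move=> om _; rewrite mulrBr.
rewrite sumrB; congr (_ - _).
rewrite /NS -(marginal (fun a => (~~ stopped E a k)%:R)); apply: eq_bigr => om _.
by rewrite -stopped_trunc.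
Qed.

Lemma NS_ge0 k : 0 <= NS k.
Proof. by apply: sumr_ge0 => om _; apply: mulr_ge0; [apply: prob_ge0|apply: ler0n]. Qed.

Lemma NS_le1 k : NS k <= 1.
Proof.
rewrite -(prob_sum k); apply: ler_sum => om _; apply: ler_piMr; first exact: prob_ge0.
by case: (stopped _ _ _).
Qed.

Lemma NS_le k : Rz \subset E -> gconnected Rz -> NS k <= #|Rz|%:R * p ^+ k.
Proof.
move=> RE HR.
have [T /andP [HT TR]] := exists_tree RE HR.
apply: (@le_trans _ _ (\sum_(om : outcome V k) \sum_(e in Rz)
   outcome_prob p Rz om * ([forall i, ~~ om i e])%:R)).
  apply: ler_sum => om _; rewrite -mulr_sumr; apply: ler_wpM2l; first exact: prob_ge0.
  case Hs: (stopped E om k) => /=; first by apply: sumr_ge0 => e _; apply: ler0n.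
  case: (boolP [exists e in Rz, [forall i, ~~ om i e]]) => [/existsP [e /andP [eR He]] | Hn].
    rewrite (bigD1 e) //= He /= lerDl; by apply: sumr_ge0 => e' _; apply: ler0n.
  suff : stopped E om k by rewrite Hs.
  apply/existsP; exists T; rewrite HT /=.
  apply: (fintype.subset_trans TR); apply/fintype.subsetP => e eR; rewrite inE (fintype.subsetP RE) //=.
  move/existsPn: Hn => /(_ e); rewrite eR /= => /forallPn [i]; rewrite negbK => Hi.
  by apply/existsP; exists i; rewrite ltn_ord.
rewrite exchange_big /= (eq_bigr (fun _ => p ^+ k)); last by move=> e eR; apply: prob_none.
by rewrite sumr_const mulr_natl.
Qed.

Lemma prob_stop_ge0 k : 0 <= prob_stop_at p E Rz k.
Proof. by apply: sumr_ge0 => om _; apply: mulr_ge0; [apply: prob_ge0|apply: ler0n]. Qed.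

Lemma tele N : \sum_(k < N.+1) k%:R * prob_stop_at p E Rz k =
  \sum_(j < N) NS j - N%:R * NS N.
Proof.
elim: N => [|N IH]; first by rewrite big_ord1 big_ord0 !mul0r subr0.
rewrite big_ord_recr /= IH prob_stop_succ big_ord_recr /= -natr1; ring.
Qed.

Lemma partial_bound N : \sum_(k < N) k%:R * prob_stop_at p E Rz k <= \sum_(j < N) NS j.
Proof.
case: N => [|N]; first by rewrite !big_ord0.
rewrite tele big_ord_recr /=.
have := NS_ge0 N; have := NS_ge0 N.+1; have : (0 : R) <= N%:R by apply: ler0n.
nra.
Qed.

End Prob.

Lemma geo_bound (R : realType) (f : nat -> R) (m : R) K :
  (forall j, 0 <= f j) -> (forall j, f j <= 1) ->
  (forall j, f j <= m * (1/2) ^+ j) -> m <= 2 ^+ K ->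
  forall N, \sum_(j < N) f j <= K%:R + 2.
Proof.
move=> f0 f1 fm mK.
have m0 : 0 <= m by have := fm 0%N; rewrite expr0 mulr1; apply: le_trans.
have hK : m * (1/2) ^+ K <= 1.
  have h0 : (0:R) <= 1/2 by lra.
  apply: le_trans (ler_wpM2r (exprn_ge0 K h0) mK) _.
  by rewrite -exprMn mul1r mulfV // expr1n.
suff H : forall N, \sum_(j < N) f j <=
   (minn N K)%:R + 2 - 2 * m * (1/2) ^+ (maxn N K).
  move=> N; apply: (le_trans (H N)).
  have : (minn N K)%:R <= K%:R :> R by rewrite ler_nat geq_minr.
  have : 0 <= m * (1/2) ^+ (maxn N K) by apply: mulr_ge0 => //; apply: exprn_ge0.
  lra.
elim=> [|N IH].
  by rewrite big_ord0 min0n max0n /=; lra.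
rewrite big_ord_recr /=.
case: (ltnP N K) => NK.
  have -> : minn N.+1 K = N.+1 by lia.
  have -> : maxn N.+1 K = K by lia.
  move: IH; have -> : minn N K = N by lia.
  have -> : maxn N K = K by lia.
  rewrite -natr1; have := f1 N; lra.
have -> : minn N.+1 K = K by lia.
have -> : maxn N.+1 K = N.+1 by lia.
move: IH; have -> : minn N K = K by lia.
have -> : maxn N K = N by lia.
have -> : 2 * m * (1/2) ^+ N.+1 = m * (1/2) ^+ N by rewrite exprS; field.
have := fm N; lra.
Qed.

Lemma card_simple (V : finType) (E : {set {set V}}) :
  simple_graph E -> (#|E| <= #|V| * #|V|)%N.
Proof.
move=> Hs.
have sub : E \subset [set [set x.1; x.2] | x : V * V].
  apply/fintype.subsetP => e eE; move/forallP: Hs => /(_ e) /implyP /(_ eE).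
  move=> /cards2P [x [y [_ ->]]]; apply/imsetP; exists (x, y) => //; by rewrite inE.
apply: leq_trans (subset_leq_card sub) _; apply: leq_trans (leq_imset_card _ _) _.
by rewrite card_prod.
Qed.

Theorem lemma4 (R : realType) (p : R) :
  0 <= p -> p < 1 / 2 ->
  exists C : R, 0 < C /\
    forall (V : finType) (E Rz : {set {set V}}),
      simple_graph E -> (2 <= #|V|)%N ->
      Rz \subset E -> gconnected Rz ->
      (forall (k : nat) (om : outcome V k), 0 < outcome_prob p Rz om ->
         forall T : {set {set V}}, spanning_tree E T ->
           T \subset yes_edges E om k -> T \subset Rz) /\
      (expected_queries p E Rz <= (C * #|E|%:R * ln (#|V|%:R))%:E)%E.
Proof.
move=> p0 phalf.
have p1 : p <= 1 by lra.
have ln2 : 0 < ln (2 : R) by apply: ln_gt0; lra.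
exists (6 / ln 2); split; first by apply: divr_gt0.
move=> V E Rz Hs Hn RE HR; split.
  move=> k om Hp T _ HT; apply/fintype.subsetP => e eT.
  have := fintype.subsetP HT e eT; rewrite inE => /andP [_ /existsP [i /andP [_ Hi]]].
  exact: (prob_pos_yes Hp Hi).
set n := #|V|; set m := #|E|; set t := trunc_log 2 n.
have Hm : (m <= 2 ^ (t.+1 + t.+1))%N.
  rewrite expnD; apply: leq_trans (card_simple Hs) _.
  by apply: leq_mul; apply: ltnW; apply: trunc_log_ltn.
have HS : forall N, \sum_(j < N) NS p Rz E j <= (t.+1 + t.+1)%:R + 2.
  apply: (geo_bound (m := m%:R)).
  - by move=> j; apply: NS_ge0.
  - by move=> j; apply: NS_le1.
  - move=> j; apply: le_trans (NS_le p0 p1 j RE HR) _.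
    apply: ler_pM; [exact: ler0n | exact: exprn_ge0 | |].
      by rewrite ler_nat; apply: subset_leq_card.
    by apply: lerXn2r; rewrite ?nnegrE //; lra.
  - by rewrite -natrX ler_nat.
have Ht : t%:R * ln 2 <= ln (n%:R : R).
  have : (2 ^ t <= n)%N by apply: trunc_logP => //; lia.
  rewrite -(ler_nat R) natrX => H.
  rewrite mulr_natl -lnXn // ler_ln // posrE; first by apply: exprn_gt0.
  by rewrite ltr0n /n; lia.
have Hl : ln 2 <= ln (n%:R : R).
  rewrite ler_ln ?posrE ?ltr0n /n; last lia; last by [].
  by rewrite (ler_nat R 2).
have HC : (t.+1 + t.+1)%:R + 2 <= 6 / ln 2 * ln (n%:R : R).
  rewrite mulrAC ler_pdivlMr // natrD -natr1.
  nra.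
rewrite /expected_queries.
apply: (lime_le (is_cvg_nneseries _)) => [k _ _|].
  by rewrite lee_fin; apply: mulr_ge0; [apply: ler0n | apply: prob_stop_ge0].
apply: nearW => N.
rewrite sumEFin lee_fin big_mkord.
rewrite (eq_bigr (fun k : 'I_N => m%:R * (k%:R * prob_stop_at p E Rz k))); last first.
  by move=> k _; rewrite natrM mulrA.
rewrite -mulr_sumr.
have -> : 6 / ln 2 * m%:R * ln (n%:R : R) = m%:R * (6 / ln 2 * ln (n%:R : R)) by ring.
apply: ler_wpM2l; first exact: ler0n.
apply: (le_trans _ HC); apply: (le_trans _ (HS N)); exact: partial_bound.
Qed.
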